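(* Let $\lambda_0,\lambda_1,\lambda_2$ be positive integers with height $h=\lambda_0+\lambda_1+\lambda_2$. For each labelling $\{i,j,k\}=\{0,1,2\}$ consider the transformed triple $\left(\lambda_j,\lambda_k,\frac{(\lambda_j+\lambda_k)^2}{\lambda_i}\right)$, with height $h_i=\lambda_j+\lambda_k+\frac{(\lambda_j+\lambda_k)^2}{\lambda_i}$. Then there is at most one index $i\in\{0,1,2\}$ with $h_i\le h$. Moreover, if $h_i=h$ then the transformed triple is a permutation of $(\lambda_0,\lambda_1,\lambda_2)$. *)

(* Defs.v *)
From HB Require Import structures.
From mathcomp Require Import all_boot all_order all_algebra.
Set Implicit Arguments. Unset Strict Implicit. Unset Printing Implicit Defensive.
Import Order.TTheory GRing.Theory Num.Theory.
Local Open Scope ring_scope.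

Definition height (l : 'I_3 -> rat) : rat := l 0 + l 1 + l 2.

(* The two indices other than i, as (j, k) with {i,j,k} = {0,1,2}. *)
Definition other1 (i : 'I_3) : 'I_3 := if i == 0 then 1 else 0.
Definition other2 (i : 'I_3) : 'I_3 := if i == 2 then 1 else 2.

Definition transf (l : 'I_3 -> rat) (i : 'I_3) : seq rat :=
  [:: l (other1 i); l (other2 i); (l (other1 i) + l (other2 i)) ^+ 2 / l i].

Definition transf_height (l : 'I_3 -> rat) (i : 'I_3) : rat :=
  l (other1 i) + l (other2 i) + (l (other1 i) + l (other2 i)) ^+ 2 / l i.

(* Main.v *)
Require Import Defs.
From HB Require Import structures.
From mathcomp Require Import all_boot all_order all_algebra.
From mathcomp Require Import lra.
Import Order.TTheory GRing.Theory Num.Theory.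
Local Open Scope ring_scope.

Lemma key (x s t : rat) : s + s ^+ 2 / x <= t -> 0 < x -> 0 <= s ->
  t = x + s -> s <= x.
Proof.
move=> H Ha Hs E; subst t.
have : s ^+ 2 / x <= x by lra.
rewrite ler_pdivrMr // => H2. nra.
Qed.

Lemma keyeq (x s t : rat) : s + s ^+ 2 / x = t -> 0 < x -> 0 <= s ->
  t = x + s -> s = x.
Proof.
move=> H Ha Hs E; subst t.
have : s ^+ 2 / x = x by lra.
move/(congr1 (fun y => y * x)). rewrite divfK ?gt_eqF // => H2. nra.
Qed.

Theorem lemma3p14 (l0 l1 l2 : nat) (h0 : (0 < l0)%N) (h1 : (0 < l1)%N)
  (h2 : (0 < l2)%N) :
  let l : 'I_3 -> rat := fun i => [:: l0%:R; l1%:R; l2%:R]`_i in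
  (forall i j : 'I_3, transf_height l i <= height l ->
      transf_height l j <= height l -> i = j) /\
  (forall i : 'I_3, transf_height l i = height l ->
      perm_eq (transf l i) [:: l 0; l 1; l 2]).
Proof.
move=> l.
have p0 : 0 < l0%:R :> rat by rewrite ltr0n.
have p1 : 0 < l1%:R :> rat by rewrite ltr0n.
have p2 : 0 < l2%:R :> rat by rewrite ltr0n.
rewrite /transf_height /height /transf /l /other1 /other2.
set a := (l0%:R : rat) in p0 *; set b := (l1%:R : rat) in p1 *; set c := (l2%:R : rat) in p2 *.
clearbody a b c.
split.
{ move=> [[|[|[|//]]] Hi] [[|[|[|//]]] Hj] /= A B; try by apply: val_inj.
  all: exfalso.
  all: pose proof (@key _ _ _ A) as K; do 3 (lapply K; [clear K; intro K| lra]).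
  all: pose proof (@key _ _ _ B) as KB; do 3 (lapply KB; [clear KB; intro KB| lra]).
  all: lra. }
move=> [[|[|[|//]]] Hi] /= A.
all: pose proof (@keyeq _ _ _ A) as K; do 3 (lapply K; [clear K; intro K| lra]).
all: rewrite K expr2 mulfK ?gt_eqF //.
- by change [:: b; c; a] with (rot 1 [:: a; b; c]); rewrite perm_rot.
- by rewrite perm_cons; change [:: c; b] with (rot 1 [:: b; c]); rewrite perm_rot.
Qed.
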